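(* Let $\mathcal{H}$ be a $k$-uniform hypergraph with vertex degrees $d_i$, and for each vertex $i$ let \[ m_{i}=\frac{\sum_{\{i,i_{2},\cdots,i_{k}\}\in E(\mathcal{H})}d_{i_{2}}\cdots d_{i_{k}}}{d_{i}^{k-1}}. \] Then \[ \rho(\mathcal{Q}(\mathcal{H}))\leq\max_{e\in E(\mathcal{H})}\max_{\{i,j\}\subseteq e}\frac{d_{i}+d_{j}+\sqrt{(d_{i}-d_{j})^{2}+4m_{i}m_{j}}}{2}. \]
   Context: A $k$-uniform hypergraph $\mathcal{H}$ on vertex set $[n]$ has edges that are $k$-element subsets of $[n]$; $d_i$ is the number of edges containing vertex $i$. The sum over $\{i,i_2,\dots,i_k\}\in E(\mathcal{H})$ runs over the edges containing $i$, with $i_2,\dots,i_k$ the other vertices of that edge. The adjacency tensor $\mathcal{A}(\mathcal{H})$ has entries $\mathcal{A}_{i_1\cdots i_k}=\frac{1}{(k-1)!}$ if $\{i_1,\dots,i_k\}\in E(\mathcal{H})$ and $0$ otherwise; $\mathcal{D}(\mathcal{H})$ is the diagonal tensor with $\mathcal{D}_{i\cdots i}=d_i$; $\mathcal{Q}(\mathcal{H})=\mathcal{D}(\mathcal{H})+\mathcal{A}(\mathcal{H})$ is the signless Laplacian tensor. For a tensor $\mathcal{T}$ and $x\in\mathbb{C}^n$, $(\mathcal{T}x)_i=\sum_{i_2,\dots,i_k}\mathcal{T}_{ii_2\cdots i_k}x_{i_2}\cdots x_{i_k}$; $\lambda$ is an eigenvalue if $\mathcal{T}x=\lambda x^{[k-1]}$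 for some nonzero $x$, where $x^{[k-1]}=(x_1^{k-1},\dots,x_n^{k-1})^T$; $\rho(\mathcal{T})$ is the maximum modulus of eigenvalues. *)

(* Defs.v *)
From HB Require Import structures.
From mathcomp Require Import all_boot all_order all_algebra.
From mathcomp Require Import complex.
Set Implicit Arguments. Unset Strict Implicit. Unset Printing Implicit Defensive.
Import Order.TTheory GRing.Theory Num.Theory.
Local Open Scope ring_scope.

Definition uniform (n k : nat) (E : {set {set 'I_n}}) : Prop :=
  forall e, e \in E -> #|e| = k.

Definition deg (n : nat) (E : {set {set 'I_n}}) (i : 'I_n) : nat :=
  #|[set e in E | i \in e]|.

(* An order-k tensor of dimension n over a ring S: we represent it as a
   function on index sequences; only sequences of length k are relevant. *)
Definition tensor (S : Type) (n : nat) := seq 'I_n -> S.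

Section Tensors.
Variable S : comPzRingType.
Variables n k : nat.

Definition adj_tensor (F : fieldType) (E : {set {set 'I_n}}) : tensor F n :=
  fun s => if (size s == k) && ([set x in s] \in E) then ((k.-1)`!%:R)^-1 else 0.

Definition deg_tensor (F : fieldType) (E : {set {set 'I_n}}) : tensor F n :=
  fun s => match s with
           | i :: t => if (size s == k) && all (fun j => j == i) t
                       then (deg E i)%:R else 0
           | [::] => 0
           end.

Definition Q_tensor (F : fieldType) (E : {set {set 'I_n}}) : tensor F n :=
  fun s => deg_tensor F E s + adj_tensor F E s.

Definition tensor_apply (T : tensor S n) (x : 'I_n -> S) (i : 'I_n) : S :=
  \sum_(t : (k.-1).-tuple 'I_n) T (i :: val t) * \prod_(j <- val t) x j.

Definition is_eigenvalue (T : tensor S n) (lambda : S) : Prop :=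
  exists x : 'I_n -> S, (exists i, x i != 0) /\
    forall i, tensor_apply T x i = lambda * x i ^+ k.-1.
End Tensors.

Definition m_val (R : fieldType) (n k : nat) (E : {set {set 'I_n}}) (i : 'I_n) : R :=
  (\sum_(e in E | i \in e) \prod_(j in e :\ i) (deg E j)%:R)
    / ((deg E i)%:R ^+ k.-1).

(* the bound max_{e in E} max_{ {i,j} ⊆ e, i<>j } (d_i+d_j+sqrt((d_i-d_j)^2+4 m_i m_j))/2;
   the maximum over the empty family is taken as 0 (all terms are >= 0). *)
Definition pair_bound (R : rcfType) (n k : nat) (E : {set {set 'I_n}}) (i j : 'I_n) : R :=
  let di : R := (deg E i)%:R in let dj : R := (deg E j)%:R in
  (di + dj + Num.sqrt ((di - dj) ^+ 2 + 4 * @m_val R n k E i * @m_val R n k E j)) / 2.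

Definition degree_bound (R : rcfType) (n k : nat) (E : {set {set 'I_n}}) : R :=
  \big[Num.max/0]_(e in E) \big[Num.max/0]_(i in e)
     \big[Num.max/0]_(j in e | i != j) @pair_bound R n k E i j.

(* Main.v *)
Require Import Defs.
From HB Require Import structures.
From mathcomp Require Import all_boot all_order all_algebra.
From mathcomp Require Import complex.
From mathcomp Require Import ring lra.
Import Order.TTheory GRing.Theory Num.Theory.
Local Open Scope ring_scope.
Set Implicit Arguments. Unset Strict Implicit.

Section Main.
Variable R : rcfType.
Variables n k : nat.
Variable E : {set {set 'I_n}}.
Hypothesis hk : (2 <= k)%N.
Hypothesis hE : uniform k E.
Local Notation C := R[i].

Lemma prod_nseq (F : 'I_n -> C) m a : \prod_(j <- nseq m a) F j = F a ^+ m.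
Proof.
elim: m => [|m IH]; first by rewrite big_nil expr0.
by rewrite /= big_cons IH exprS.
Qed.

Lemma deg_part (i : 'I_n) (x : 'I_n -> C) :
  \sum_(t : (k.-1).-tuple 'I_n) deg_tensor k C E (i :: val t) * \prod_(j <- val t) x j
  = (deg E i)%:R * x i ^+ k.-1.
Proof.
rewrite (bigD1 [tuple of nseq k.-1 i]) //=; rewrite [X in _ + X]big1 ?addr0.
  have -> : \prod_(j <- val [tuple of nseq k.-1 i]) x j = x i ^+ k.-1 by exact: prod_nseq.
  rewrite /deg_tensor.
  have -> : size (i :: val [tuple of nseq k.-1 i]) == k.
    by rewrite /= size_nseq prednK //; case: k hk.
  have -> : all (fun j => j == i) (val [tuple of nseq k.-1 i]).
    by apply/all_pred1P; rewrite /= size_nseq.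
  by [].
move=> t /eqP neq; rewrite /deg_tensor.
case: ifP => [/andP [_ H]|_]; last by rewrite mul0r.
exfalso; apply: neq.
apply: val_inj => /=.
have /all_pred1P -> : all (pred1 i) (val t) by [].
by rewrite size_tuple.
Qed.


Lemma size_cons_t (i : 'I_n) (t : (k.-1).-tuple 'I_n) : size (i :: val t) = k.
Proof. by rewrite /= size_tuple prednK //; case: k hk. Qed.

Lemma uniq_of (i : 'I_n) (t : (k.-1).-tuple 'I_n) :
  [set x in i :: val t] \in E -> uniq (i :: val t).
Proof.
move=> hs; apply/card_uniqP; rewrite -cardsE (hE hs) size_cons_t //.
Qed.

Lemma prod_set (F : 'I_n -> C) (i : 'I_n) (t : (k.-1).-tuple 'I_n) :
  [set x in i :: val t] \in E ->
  \prod_(j <- val t) F j = \prod_(j in [set x in i :: val t] :\ i) F j.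
Proof.
move=> hs; have /= /andP [nin ut] := uniq_of hs.
rewrite big_uniq //; apply: eq_bigl => j; rewrite !inE.
by case: (eqVneq j i) => [->|] //=; rewrite (negbTE nin).
Qed.

Lemma count_bound (i : 'I_n) (e : {set 'I_n}) :
  e \in E -> i \in e ->
  (#|[pred t : (k.-1).-tuple 'I_n | [set x in i :: val t] == e]| <= (k.-1)`!)%N.
Proof.
move=> he hi.
have sub : [pred t : (k.-1).-tuple 'I_n | [set x in i :: val t] == e] \subset
   [set t : (k.-1).-tuple 'I_n | all (mem (e :\ i)) t & uniq t].
  apply/subsetP => t; rewrite !inE => /eqP hs.
  have := uniq_of (etrans (congr1 (fun z => z \in E) hs) he) => /= /andP [nin ->].
  rewrite andbT; apply/allP => j jt; rewrite inE -hs !inE jt orbT andbT.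
  by apply: contraNneq nin => <-.
apply: leq_trans (subset_leq_card sub) _.
rewrite card_uniq_tuples.
have -> : #|mem (e :\ i)| = k.-1.
  have := cardsD1 i e; rewrite hi (hE he) add1n => ->; by [].
by rewrite ffactnn.
Qed.


Lemma adj_bound (i : 'I_n) (x : 'I_n -> C) :
  `|\sum_(t : (k.-1).-tuple 'I_n) adj_tensor k C E (i :: val t) * \prod_(j <- val t) x j|
   <= \sum_(e in E | i \in e) \prod_(j in e :\ i) `|x j|.
Proof.
apply: le_trans (ler_norm_sum _ _ _) _.
set c := ((k.-1)`!%:R : C)^-1.
have c0 : 0 <= c by rewrite invr_ge0 ler0n.
have step : forall t : (k.-1).-tuple 'I_n,
   `|adj_tensor k C E (i :: val t) * \prod_(j <- val t) x j| =
   \sum_(e in E | i \in e) (if [set x in i :: val t] == e then c * \prod_(j in e :\ i) `|x j| else 0).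
  move=> t; rewrite normrM normr_prod /adj_tensor size_cons_t eqxx /=.
  case: ifP => hin.
    rewrite (bigD1 [set x in i :: val t]) /=; last by rewrite hin !inE eqxx.
    rewrite eqxx [X in _ + X]big1 ?addr0; last first.
      by move=> e /andP [_ ne]; rewrite eq_sym (negbTE ne).
    by rewrite ger0_norm // (prod_set _ hin).
  rewrite normr0 mul0r; apply/esym/big1 => e /andP [he _].
  by case: eqP => // Heq; rewrite -Heq hin in he.
rewrite (eq_bigr _ (fun t _ => step t)) exchange_big /=.
apply: ler_sum => e /andP [he hi].
rewrite -big_mkcond /=.
set P := \prod_(j in e :\ i) `|x j|.
have P0 : 0 <= P by apply: prodr_ge0 => j _; exact: normr_ge0.
rewrite sumr_const.
rewrite -mulrnAl.
apply: ler_piMl => //.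
rewrite -mulr_natl ler_pdivrMr ?ltr0n ?fact_gt0 // mul1r ler_nat.
exact: count_bound.
Qed.


Lemma row_ineq (lambda : C) (x : 'I_n -> C)
  (Hx : forall i, tensor_apply k (Q_tensor k C E) x i = lambda * x i ^+ k.-1) (i : 'I_n) :
  `|lambda - (deg E i)%:R| * `|x i| ^+ k.-1 <= \sum_(e in E | i \in e) \prod_(j in e :\ i) `|x j|.
Proof.
have h := Hx i; rewrite /tensor_apply /Q_tensor in h.
rewrite (eq_bigr _ (fun t _ => mulrDl _ _ _)) big_split /= deg_part in h.
rewrite -normrX -normrM.
have -> : (lambda - (deg E i)%:R) * x i ^+ k.-1 =
  \sum_(t : (k.-1).-tuple 'I_n) adj_tensor k C E (i :: val t) * \prod_(j <- val t) x j.
  by rewrite mulrBl -h addrC addrK.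
exact: adj_bound.
Qed.


Lemma G_ineq (lambda : C) (x : 'I_n -> C)
  (Hx : forall i, tensor_apply k (Q_tensor k C E) x i = lambda * x i ^+ k.-1)
  (y : 'I_n -> C) (y0 : forall j, 0 <= y j)
  (hxy : forall j, `|x j| = (deg E j)%:R * y j)
  (i : 'I_n) (Y : C) (hd : (0 < deg E i)%N)
  (HY : forall e j, e \in E -> i \in e -> j \in e :\ i -> y j <= Y) :
  `|lambda - (deg E i)%:R| * y i ^+ k.-1 <= m_val C k E i * Y ^+ k.-1.
Proof.
have dpos : 0 < ((deg E i)%:R : C) ^+ k.-1 by rewrite exprn_gt0 // ltr0n.
rewrite -(ler_pM2r dpos).
have H := row_ineq Hx i; rewrite hxy exprMn in H.
rewrite -mulrA (mulrC (y i ^+ _)).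
apply: le_trans H _.
rewrite /m_val mulrAC divfK ?gt_eqF // big_distrl /=.
apply: ler_sum => e /andP [he hi].
rewrite (eq_bigr _ (fun j _ => hxy j)) big_split /=.
apply: ler_wpM2l.
  by apply: prodr_ge0 => j _; rewrite ler0n.
have -> : Y ^+ k.-1 = \prod_(j in e :\ i) Y.
  rewrite prodr_const; congr (_ ^+ _).
  by have := cardsD1 i e; rewrite hi (hE he) add1n => -> .
apply: ler_prod => j jin; rewrite y0 /=; exact: HY jin.
Qed.


Lemma final_real (L a b ma mb : R) :
  0 <= a -> 0 <= b -> 0 <= ma -> 0 <= mb ->
  (L <= a \/ L <= b \/ (a <= L /\ b <= L /\ (L - a) * (L - b) <= ma * mb)) ->
  L <= (a + b + Num.sqrt ((a - b) ^+ 2 + 4 * ma * mb)) / 2.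
Proof.
move=> a0 b0 ma0 mb0 H.
have D0 : 0 <= (a - b) ^+ 2 + 4 * ma * mb.
  by apply: addr_ge0; [exact: sqr_ge0 | rewrite !mulr_ge0].
set s := Num.sqrt _.
have s0 : 0 <= s by exact: sqrtr_ge0.
have s2 : s ^+ 2 = (a - b) ^+ 2 + 4 * ma * mb by exact: sqr_sqrtr.
have mm : 0 <= ma * mb by exact: mulr_ge0.
rewrite ler_pdivlMr ?ltr0n //.
have m4 : 0 <= 4 * ma * mb by rewrite !mulr_ge0.
have sq : forall z, z ^+ 2 <= s ^+ 2 -> z <= s.
  move=> z hz; have: z <= `|z| := ler_norm z.
  have : `|z| <= s.
    by rewrite -(ler_pXn2r (n:=2)) // ?nnegrE ?normr_ge0 // real_normK ?num_real.
  move=> h1 h2; exact: le_trans h2 h1.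
have hab : a - b <= s by apply: sq; rewrite s2 lerDl.
have hba : b - a <= s by apply: sq; rewrite s2 -sqrrN opprB lerDl.
case: H => [H|[H|[H1 [H2 H3]]]]; try lra.
have : 2 * L - a - b <= s.
  apply: sq; rewrite s2.
  have -> : (2 * L - a - b) ^+ 2 = (a - b) ^+ 2 + 4 * ((L - a) * (L - b)) by ring.
  by rewrite -mulrA lerD2l ler_pM2l ?ltr0n.
lra.
Qed.

Lemma bigmax_ge0 (I : finType) (P : pred I) (F : I -> R) :
  0 <= \big[Num.max/0]_(i | P i) F i.
Proof.
apply: (big_rec (fun z => 0 <= z)) => // i z _ hz.
by rewrite le_max hz orbT.
Qed.

Lemma m_val_ge0 (i : 'I_n) : 0 <= m_val R k E i.
Proof.
rewrite /m_val divr_ge0 ?exprn_ge0 ?ler0n //.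
by apply: sumr_ge0 => e _; apply: prodr_ge0 => j _; rewrite ler0n.
Qed.

Lemma m_val_C (i : 'I_n) : m_val C k E i = (m_val R k E i)%:C%C.
Proof.
rewrite /m_val fmorph_div rmorphXn rmorph_sum rmorph_nat /=; congr (_ / _).
by apply: eq_bigr => e _; rewrite rmorph_prod; apply: eq_bigr => j _; rewrite rmorph_nat.
Qed.

Lemma Cnonneg_le (u v : C) : 0 <= u -> 0 <= v -> (complex.Re u <= complex.Re v) -> u <= v.
Proof.
move=> u0 v0 h; rewrite -(RRe_real (ger0_real u0)) -(RRe_real (ger0_real v0)).
by rewrite lecR.
Qed.


Lemma pair_le_degree (e : {set 'I_n}) (p q : 'I_n) :
  e \in E -> p \in e -> q \in e -> p != q -> pair_bound R k E p q <= degree_bound R k E.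
Proof.
move=> he hp hq pq; rewrite /degree_bound.
apply: le_trans (le_bigmax_cond _ _ he).
apply: le_trans (le_bigmax_cond _ _ hp).
have hc : (q \in e) && (p != q) by rewrite hq pq.
exact: (le_bigmax_cond _ (fun j => pair_bound R k E p j) hc).
Qed.

Lemma main_bound (lambda : C) (x : 'I_n -> C) (i0 : 'I_n) (Hi0 : x i0 != 0)
  (Hx : forall i, tensor_apply k (Q_tensor k C E) x i = lambda * x i ^+ k.-1) :
  `|lambda| <= (degree_bound R k E)%:C%C.
Proof.
have km : (0 < k.-1)%N by case: k hk => [|[|]].
have [->|l0] := eqVneq lambda 0.
  by rewrite normr0 ler0c bigmax_ge0.
have iso : forall j, deg E j = 0%N -> x j = 0.
  move=> j hj; have H := row_ineq Hx j.
  rewrite hj subr0 big_pred0 in H; last first.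
    move=> e; apply/negP => /andP [he hje].
    have : e \in [set e in E | j \in e] by rewrite inE he hje.
    by rewrite (cards0_eq hj) inE.
  rewrite pmulr_rle0 ?normr_gt0 // in H.
  have : `|x j| ^+ k.-1 == 0 by rewrite eq_le H exprn_ge0.
  by rewrite expf_eq0 normr_eq0 => /andP [_ /eqP].
pose y := fun j => `|x j| / ((deg E j)%:R : C).
have y0 : forall j, 0 <= y j by move=> j; rewrite divr_ge0 ?ler0n.
have hxy : forall j, `|x j| = (deg E j)%:R * y j.
  move=> j; case: (posnP (deg E j)) => [h|h].
    by rewrite /y (iso j h) normr0 mul0r mulr0.
  by rewrite /y mulrC divfK // pnatr_eq0 -lt0n.
pose F := fun j => complex.Re (y j).
have yle : forall u v, F u <= F v -> y u <= y v := fun u v h => Cnonneg_le (y0 u) (y0 v) h.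
pose p := [arg max_(j > i0) F j]%O.
have pmax : forall j, y j <= y p.
  rewrite /p; case: arg_maxP => //= p' _ hp j; apply: yle; exact: hp.
have di0 : (0 < deg E i0)%N by rewrite lt0n; apply/eqP => h; move: Hi0; rewrite iso // eqxx.
have yi0 : 0 < y i0 by rewrite divr_gt0 ?normr_gt0 ?ltr0n.
have yp0 : 0 < y p := lt_le_trans yi0 (pmax i0).
have dp : (0 < deg E p)%N.
  by rewrite lt0n; apply/eqP => h; move: yp0; rewrite /y h invr0 mulr0 ltxx.
have : [set e in E | p \in e] != set0 by rewrite -card_gt0.
case/set0Pn => e0; rewrite inE => /andP [he0 hpe0].
have : e0 :\ p != set0.
  rewrite -card_gt0.
  have c : #|e0 :\ p| = k.-1 by have := cardsD1 p e0; rewrite hpe0 (hE he0) add1n => ->.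
  by rewrite c.
case/set0Pn => j0 hj0.
pose N := [pred j | [exists e in E, (p \in e) && (j \in e :\ p)]].
have Nj0 : N j0 by apply/existsP; exists e0; rewrite he0 hpe0 hj0.
pose q := [arg max_(j > j0 | N j) F j]%O.
have [Nq qmax] : N q /\ forall j, N j -> y j <= y q.
  rewrite /q; case: arg_maxP => // q' Nq' hq; split => // j Nj; apply: yle; exact: hq.
have /existsP [eq /andP [heq /andP [hpq hqq]]] := Nq.
have [qp hqe] : q != p /\ q \in eq by move: hqq; rewrite !inE => /andP [-> ->].
have dq : (0 < deg E q)%N.
  by rewrite card_gt0; apply/set0Pn; exists eq; rewrite inE heq hqe.
have H1 := G_ineq Hx y0 hxy (i := p) (Y := y q) dp
  (fun e j he hpe hj => qmax j (introT existsP (ex_intro _ e (introT andP (conj he (introT andP (conj hpe hj))))))).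
have H2 := G_ineq Hx y0 hxy (i := q) (Y := y p) dq (fun e j _ _ _ => pmax j).
have key : lambda = (deg E p)%:R \/
   `|lambda - (deg E p)%:R| * `|lambda - (deg E q)%:R| <= m_val C k E p * m_val C k E q.
  have [yq0|yq0] := eqVneq (y q) 0.
    left; move: H1; rewrite yq0 expr0n gtn_eqF // mulr0 mulrC pmulr_rle0 ?exprn_gt0 //.
    move=> h; have : `|lambda - (deg E p)%:R| == 0 by rewrite eq_le h normr_ge0.
    by rewrite normr_eq0 subr_eq0 => /eqP.
  right.
  have yq0' : 0 < y q by rewrite lt_def yq0 y0.
  have ypm : 0 < y p ^+ k.-1 * y q ^+ k.-1 by rewrite mulr_gt0 ?exprn_gt0.
  rewrite -(ler_pM2r ypm).
  have := ler_pM (mulr_ge0 (normr_ge0 _) (exprn_ge0 _ (y0 p)))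
                 (mulr_ge0 (normr_ge0 _) (exprn_ge0 _ (y0 q))) H1 H2.
  set A := `|_ - _|; set B := `|_ - _|; set mp := m_val C k E p; set mq := m_val C k E q.
  have -> : A * y p ^+ k.-1 * (B * y q ^+ k.-1) = A * B * (y p ^+ k.-1 * y q ^+ k.-1) by ring.
  have -> : mp * y q ^+ k.-1 * (mq * y p ^+ k.-1) = mp * mq * (y p ^+ k.-1 * y q ^+ k.-1) by ring.
  by [].
pose L := complex.Re `|lambda|.
have hL : `|lambda| = L%:C%C by rewrite /L (RRe_real (ger0_real (normr_ge0 _))).
have hdp : ((deg E p)%:R : C) = ((deg E p)%:R : R)%:C%C by rewrite rmorph_nat.
have hdq : ((deg E q)%:R : C) = ((deg E q)%:R : R)%:C%C by rewrite rmorph_nat.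
rewrite hL lecR.
have pq : p != q by rewrite eq_sym.
apply: le_trans (pair_le_degree heq hpq hqe pq).
rewrite /pair_bound /=.
apply: final_real; rewrite ?ler0n ?m_val_ge0 //.
case: key => [hl|key].
  left; suff -> : L = (deg E p)%:R by [].
  by apply: complexI; rewrite -hL hl normr_nat hdp.
case: (lerP L (deg E p)%:R) => hLa; first by left.
case: (lerP L (deg E q)%:R) => hLb; first by right; left.
right; right; split; first exact: ltW.
split; first exact: ltW.
have hA : (L - (deg E p)%:R)%:C%C <= `|lambda - (deg E p)%:R|.
  have := lerB_dist lambda ((deg E p)%:R : C); rewrite normr_nat => h.
  by rewrite rmorphB /= -hL -hdp.
have hB : (L - (deg E q)%:R)%:C%C <= `|lambda - (deg E q)%:R|.
  have := lerB_dist lambda ((deg E q)%:R : C); rewrite normr_nat => h.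
  by rewrite rmorphB /= -hL -hdq.
rewrite -lecR rmorphM rmorphM /= -!m_val_C.
apply: le_trans key.
by apply: ler_pM => //; rewrite ler0c subr_ge0 ltW.
Qed.

End Main.

Unset Implicit Arguments.
Theorem corollary2p3 (R : rcfType) (n k : nat) (E : {set {set 'I_n}}) :
  (2 <= k)%N -> uniform k E ->
  forall lambda : R[i], is_eigenvalue k (Q_tensor k R[i] E) lambda ->
    `|lambda| <= (degree_bound R k E)%:C%C.
Proof.
move=> hk hE lambda [x [[i0 Hi0] Hx]].
exact: (main_bound hk hE Hi0 Hx).
Qed.
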